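(* For every pair of non-uniformly stable matchings $\mu_1,\mu_2$ in $G$, $V(\mu_1)=V(\mu_2)$, where $V(\mu)$ denotes the set of vertices $v\in V$ with $\mu(v)\ne\emptyset$.
   Context: Setting: $G=(V,E)$ is a finite simple bipartite graph with $V=V_1\sqcup V_2$, every edge joining a vertex of $V_1$ to a vertex of $V_2$; an edge is identified with the set of its two endpoints. $E$ is partitioned into $E_1,E_2$. For $F\subseteq E$ and $v\in V$, $F(v)$ is the set of edges of $F$ incident to $v$. For every $v\in V$ there is a transitive and complete binary relation $\succsim_v$ on $E(v)\cup\{\emptyset\}$ with $e\succsim_v\emptyset$ and $\emptyset\not\succsim_v e$ for all $e\in E(v)$; $e\succ_v f$ means $e\succsim_v f$ and $f\not\succsim_v e$. A matching is $\mu\subseteq E$ with $|\mu(v)|\le1$ for all $v$; $\mu(v)$ denotes the edge of $\mu$ at $v$, or $\emptyset$. An edge $e\in E\setminus\mu$ weakly blocks $\mu$ if $e\succsim_v\mu(v)$ for every $v\in e$; it strongly blocks $\mu$ if additionally $e\succ_w\mu(w)$ for some $w\in e$. $\mu$ is non-uniformly stable if no edge of $E_1\setminus\mu$ weakly blocks $\mu$ and no edge of $E_2\setminus\mu$ strongly blocks $\mu$. *)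

(* Defs.v *)
From mathcomp Require Import all_boot.
Set Implicit Arguments. Unset Strict Implicit. Unset Printing Implicit Defensive.

(* Vertices form a finite type V; the bipartition is given by side : V -> bool
   (V1 = side true, V2 = side false).
   The empty "edge" (being unmatched) is encoded as None : option {set V}. *)

Section Matching.
Variable V : finType.

Definition bipartite_graph (side : V -> bool) (E : {set {set V}}) : Prop :=
  forall e, e \in E -> exists u w, [/\ side u, ~~ side w & e = [set u; w]].

Definition pref_dom (E : {set {set V}}) (v : V) (x : option {set V}) : bool :=
  if x is Some e then (e \in E) && (v \in e) else true.

Definition valid_prefs (E : {set {set V}})
  (pref : V -> option {set V} -> option {set V} -> bool) : Prop :=
  forall v,
    [/\ (forall x y z, pref_dom E v x -> pref_dom E v y -> pref_dom E v z ->
           pref v x y -> pref v y z -> pref v x z),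
        (forall x y, pref_dom E v x -> pref_dom E v y -> pref v x y || pref v y x)
      & (forall e, e \in E -> v \in e -> pref v (Some e) None && ~~ pref v None (Some e))].

Definition strict_pref (pref : V -> option {set V} -> option {set V} -> bool)
  v x y := pref v x y && ~~ pref v y x.

Definition is_matching (E mu : {set {set V}}) : Prop :=
  mu \subset E /\ forall v : V, #|[set e in mu | v \in e]| <= 1.

Definition mu_at (mu : {set {set V}}) (v : V) : option {set V} :=
  [pick e in mu | v \in e].

Definition weakly_blocks (pref : V -> option {set V} -> option {set V} -> bool) (mu : {set {set V}}) (e : {set V}) : Prop :=
  e \notin mu /\ forall v, v \in e -> pref v (Some e) (mu_at mu v).

Definition strongly_blocks (pref : V -> option {set V} -> option {set V} -> bool) (mu : {set {set V}}) (e : {set V}) : Prop :=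
  weakly_blocks pref mu e /\ exists2 w, w \in e & strict_pref pref w (Some e) (mu_at mu w).

Definition nonuniformly_stable (E1 E2 : {set {set V}}) (pref : V -> option {set V} -> option {set V} -> bool) (mu : {set {set V}}) : Prop :=
  (forall e, e \in E1 -> ~ weakly_blocks pref mu e) /\
  (forall e, e \in E2 -> ~ strongly_blocks pref mu e).

Definition covered (mu : {set {set V}}) : {set V} := [set v | mu_at mu v != None].

End Matching.

(* Main.v *)
Require Import Defs.
From mathcomp Require Import all_boot.
Set Implicit Arguments. Unset Strict Implicit.

Lemma mu_atP (V : finType) (mu : {set {set V}}) v e :
  mu_at mu v = Some e -> e \in mu /\ v \in e.
Proof. by rewrite /mu_at; case: pickP => // e' /andP[H1 H2] [<-]. Qed.

Lemma mu_at_in (V : finType) (E mu : {set {set V}}) v e :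
  is_matching E mu -> e \in mu -> v \in e -> mu_at mu v = Some e.
Proof.
move=> [_ Hm] He Hv; rewrite /mu_at; case: pickP => [e' /andP[He' Hv'] | H].
  have /card_le1_eqP := Hm v => /(_ e' e); rewrite !inE He' Hv' He Hv => ->//.
by have := H e; rewrite He Hv.
Qed.

Lemma mu_at_dom (V : finType) (E mu : {set {set V}}) v :
  is_matching E mu -> pref_dom E v (mu_at mu v).
Proof.
move=> [Hs _]; case Heq: (mu_at mu v) => [e|] //=.
by case: (mu_atP Heq) => He ->; rewrite (subsetP Hs _ He).
Qed.

Lemma strict_None (V : finType) (E : {set {set V}}) pref v z :
  valid_prefs E pref -> pref_dom E v z -> strict_pref pref v None z -> False.
Proof.
move=> Hp; case: z => [e|] /=; last by rewrite /strict_pref; case: (pref v None None).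
move=> /andP[He Hv]; case: (Hp v) => _ _ /(_ e He Hv) /andP[_ H].
by rewrite /strict_pref (negbTE H).
Qed.

Lemma core (V : finType) (E E1 E2 : {set {set V}}) pref mu1 mu2 x e :
  E1 :|: E2 = E -> valid_prefs E pref ->
  is_matching E mu1 -> is_matching E mu2 -> nonuniformly_stable E1 E2 pref mu2 ->
  mu_at mu1 x = Some e -> strict_pref pref x (Some e) (mu_at mu2 x) ->
  [/\ e \in E, x \in e & exists2 y, y \in e & ~~ pref y (Some e) (mu_at mu2 y)].
Proof.
move=> HE Hp H1 H2 [S1 S2] Hx Hs.
case: (mu_atP Hx) => He1 Hxe.
have HeE : e \in E by case: H1 => /subsetP ->.
split=> //.
have Hn2 : e \notin mu2.
  apply/negP => He2; move: Hs; rewrite (mu_at_in H2 He2 Hxe) /strict_pref.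
  by case: (pref x _ _).
case: (boolP [forall y in e, pref y (Some e) (mu_at mu2 y)]) => Hall.
  exfalso.
  have Hw : weakly_blocks pref mu2 e.
    by split=> // v Hv; move/forallP: Hall => /(_ v); rewrite Hv.
  move: HeE; rewrite -HE inE => /orP[/S1 | /S2]; first by apply.
  by apply; split=> //; exists x.
move: Hall; rewrite negb_forall => /existsP[y]; rewrite negb_imply => /andP[Hy Hn].
by exists y.
Qed.

Lemma into_B (V : finType) (E E1 E2 : {set {set V}}) pref mu1 mu2 x :
  E1 :|: E2 = E -> valid_prefs E pref ->
  is_matching E mu1 -> is_matching E mu2 -> nonuniformly_stable E1 E2 pref mu2 ->
  strict_pref pref x (mu_at mu1 x) (mu_at mu2 x) ->
  exists2 y, strict_pref pref y (mu_at mu2 y) (mu_at mu1 y) & mu_at mu1 y = mu_at mu1 x.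
Proof.
move=> HE Hp H1 H2 Hst Hs.
case Hx: (mu_at mu1 x) Hs => [e|] Hs; last first.
  by case: (strict_None Hp (mu_at_dom x H2) Hs).
case: (core HE Hp H1 H2 Hst Hx Hs) => HeE Hxe [y Hy Hn].
have Hy1 : mu_at mu1 y = Some e by apply: (mu_at_in H1) => //; case: (mu_atP Hx).
exists y => //; rewrite Hy1 /strict_pref Hn andbT.
case: (Hp y) => _ Hc _.
have := Hc (mu_at mu2 y) (Some e) (mu_at_dom y H2); rewrite /= HeE Hy /= => /(_ isT).
by rewrite (negbTE Hn) orbF.
Qed.

Lemma inj_A (V : finType) (side : V -> bool) (E E1 E2 : {set {set V}}) pref mu1 mu2 x x' :
  bipartite_graph side E ->
  E1 :|: E2 = E -> valid_prefs E pref ->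
  is_matching E mu1 -> is_matching E mu2 -> nonuniformly_stable E1 E2 pref mu2 ->
  strict_pref pref x (mu_at mu1 x) (mu_at mu2 x) ->
  strict_pref pref x' (mu_at mu1 x') (mu_at mu2 x') ->
  mu_at mu1 x = mu_at mu1 x' -> x = x'.
Proof.
move=> Hb HE Hp H1 H2 Hst Hs Hs' Heq.
case Hx: (mu_at mu1 x) Hs Heq => [e|] Hs Heq; last first.
  by case: (strict_None Hp (mu_at_dom x H2) Hs).
case: (core HE Hp H1 H2 Hst Hx Hs) => HeE Hxe [y Hy Hn].
have Hx' : x' \in e by case: (mu_atP (esym Heq)).
move: Hs Hs'; rewrite -Heq /strict_pref => /andP[Px _] /andP[Px' _].
case: (Hb e HeE) => u [w [_ _ Ee]].
move: Hxe Hx' Hy Px Px' Hn; rewrite Ee !inE.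
by case/orP=> /eqP ->; case/orP=> /eqP ->; case/orP=> /eqP -> => // P1 P2; rewrite ?P1 ?P2.
Qed.

Lemma cov_sub (V : finType) (side : V -> bool) (E E1 E2 : {set {set V}}) pref mu1 mu2 :
  bipartite_graph side E ->
  E1 :|: E2 = E -> valid_prefs E pref ->
  is_matching E mu1 -> is_matching E mu2 ->
  nonuniformly_stable E1 E2 pref mu1 -> nonuniformly_stable E1 E2 pref mu2 ->
  covered mu1 \subset covered mu2.
Proof.
move=> Hb HE Hp H1 H2 S1 S2.
apply/subsetP => v; rewrite !inE; case Hv1: (mu_at mu1 v) => [e|] // _.
case Hv2: (mu_at mu2 v) => [f|] //.
pose A := [set x | strict_pref pref x (mu_at mu1 x) (mu_at mu2 x)].
pose B := [set x | strict_pref pref x (mu_at mu2 x) (mu_at mu1 x)].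
have hAB : #|A| <= #|B|.
  rewrite -(card_in_imset (f := mu_at mu1)); last first.
    by move=> x x'; rewrite !inE => Hx Hx'; apply: (inj_A Hb HE Hp H1 H2 S2 Hx Hx').
  apply: leq_trans (leq_imset_card (mu_at mu1) B).
  apply: subset_leq_card; apply/subsetP => z /imsetP[x]; rewrite inE => Hx ->.
  case: (into_B HE Hp H1 H2 S2 Hx) => y Hy <-.
  by apply/imsetP; exists y; rewrite ?inE.
have hB : #|B| = #|[set mu_at mu2 x | x in B]|.
  rewrite card_in_imset //.
  by move=> x x'; rewrite !inE => Hx Hx'; apply: (inj_A Hb HE Hp H2 H1 S1 Hx Hx').
have hlt : #|[set mu_at mu2 x | x in B]| < #|[set mu_at mu2 x | x in A]|.
  apply: proper_card; apply/properP; split.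
    apply/subsetP => z /imsetP[y]; rewrite inE => Hy ->.
    case: (into_B HE Hp H2 H1 S1 Hy) => x Hx <-.
    by apply/imsetP; exists x; rewrite ?inE.
  exists None.
    apply/imsetP; exists v => //; rewrite inE Hv1 Hv2.
    case: (mu_atP Hv1) => He Hve.
    have HeE : e \in E by case: H1 => /subsetP ->.
    by case: (Hp v) => _ _ /(_ e HeE Hve).
  apply/imsetP => -[y]; rewrite inE => Hy Hn.
  by move: Hy; rewrite -Hn => /(strict_None Hp (mu_at_dom y H1)).
have := leq_imset_card (mu_at mu2) A.
by rewrite leqNgt (leq_trans _ hlt) // -hB ltnS.
Qed.

Unset Implicit Arguments.

Theorem theorem5p1 (V : finType) (side : V -> bool) (E E1 E2 : {set {set V}})
  (pref : V -> option {set V} -> option {set V} -> bool) :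
  bipartite_graph side E ->
  E1 :|: E2 = E -> [disjoint E1 & E2] ->
  valid_prefs E pref ->
  forall mu1 mu2 : {set {set V}},
    is_matching E mu1 -> is_matching E mu2 ->
    nonuniformly_stable E1 E2 pref mu1 -> nonuniformly_stable E1 E2 pref mu2 ->
    covered mu1 = covered mu2.
Proof.
move=> Hb HE _ Hp mu1 mu2 H1 H2 S1 S2.
by apply/eqP; rewrite eqEsubset (cov_sub Hb HE Hp H1 H2 S1 S2) (cov_sub Hb HE Hp H2 H1 S2 S1).
Qed.
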